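(* Let $\alpha>0$, $t_0>0$, $x_0,v_0\in\mathcal H$, and let $x$ be a solution of the Cauchy problem $$\tfrac{\alpha}{t}\dot x(t)+\operatorname{proj}_{C(x(t))+\ddot x(t)}(0)=0\ (t>t_0),\qquad x(t_0)=x_0,\ \dot x(t_0)=v_0 .$$ Then there exists a measurable function $\theta:[t_0,+\infty)\to\Delta^m$ with $$\operatorname{proj}_{C(x(t))+\ddot x(t)}(0)=\sum_{i=1}^m\theta_i(t)\nabla f_i(x(t))+\ddot x(t)\quad\text{for all }t\in[t_0,+\infty).$$
   Context: $\mathcal H$ is a real Hilbert space. $f_1,\dots,f_m:\mathcal H\to\mathbb R$ are convex and continuously differentiable. $C(x)=\operatorname{co}\{\nabla f_i(x):i=1,\dots,m\}$. For a closed convex $K$, $\operatorname{proj}_K(y)=\arg\min_{w\in K}\|w-y\|^2$. $\Delta^m=\{\theta\in\mathbb R^m:\theta\ge0,\ \sum_i\theta_i=1\}$. A solution of the Cauchy problem is a function $x:[t_0,+\infty)\to\mathcal H$ such that: $x\in C^1([t_0,+\infty))$; $\dot x$ is absolutely continuous on $[t_0,T]$ for every $T\ge t_0$; there is a Bochner measurable $\ddot x$ with $\dot x(t)=\dot x(t_0)+\int_{t_0}^t\ddot x(s)\,ds$ for all $t$, and $\frac{d}{dt}\dot x=\ddot x$ a.e.; the equation holds for almost all $t\ge t_0$; and the initial conditions hold. Here $\ddot x$ denotes this measurable function. *)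

(* Defs.v *)
From HB Require Import structures.
From mathcomp Require Import all_boot all_order all_algebra.
From mathcomp Require Import all_classical all_reals all_analysis.
Set Implicit Arguments. Unset Strict Implicit. Unset Printing Implicit Defensive.
Import Order.TTheory GRing.Theory Num.Theory.
Import numFieldNormedType.Exports.
Local Open Scope classical_set_scope.
Local Open Scope ring_scope.

(* The real line carrying the (completed) Lebesgue sigma-algebra. *)
Definition lebR (R : realType) :=
  caratheodory_type (R:=R) (@wlength R idfun)^*%mu.

Notation lebm := (@completed_lebesgue_measure _).

(* ip is an inner product on H inducing the norm of H; together with the
   completeness of H this makes H a real Hilbert space. *)
Definition is_inner_product (R : realType) (H : normedModType R)
    (ip : H -> H -> R) : Prop :=
  [/\ (forall x y, ip x y = ip y x),
      (forall a x y z, ip (a *: x + y) z = a * ip x z + ip y z) &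
      (forall x, ip x x = `|x| ^+ 2)].

Definition is_gradient (R : realType) (H : normedModType R)
    (ip : H -> H -> R) (f : H -> R) (g : H -> H) : Prop :=
  forall x, differentiable f x /\ forall h, 'd f x h = ip (g x) h.

Definition convex_fun (R : realType) (H : normedModType R) (f : H -> R) : Prop :=
  forall (l : R) (x y : H), 0 <= l <= 1 ->
    f (l *: x + (1 - l) *: y) <= l * f x + (1 - l) * f y.

Definition simplex (R : realType) (m : nat) : set ('I_m -> R) :=
  [set th | (forall i, 0 <= th i) /\ \sum_(i < m) th i = 1].

Definition conv_hull (R : realType) (H : normedModType R) (m : nat)
    (p : 'I_m -> H) : set H :=
  [set \sum_(i < m) th i *: p i | th in @simplex R m].

Definition Cset (R : realType) (H : normedModType R) (m : nat)
    (g : 'I_m -> H -> H) (x : H) : set H :=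
  conv_hull (fun i => g i x).

Definition translate (R : realType) (H : normedModType R) (K : set H) (a : H)
  : set H := [set k + a | k in K].

Definition proj_set (R : realType) (H : normedModType R) (K : set H) (y : H) : H :=
  get [set p | K p /\ forall w, K w -> `|p - y| ^+ 2 <= `|w - y| ^+ 2].

Definition abs_cont_on (R : realType) (H : normedModType R) (u : R -> H)
    (a0 b0 : R) : Prop :=
  forall e : R, 0 < e -> exists2 d : R, 0 < d &
    forall (n : nat) (a b : 'I_n -> R),
      (forall k, a0 <= a k /\ a k <= b k /\ b k <= b0) ->
      (forall j k, j != k -> b j <= a k \/ b k <= a j) ->
      \sum_(k < n) (b k - a k) < d ->
      \sum_(k < n) `|u (b k) - u (a k)| < e.

(* Bochner (strong) measurability of u on D w.r.t. Lebesgue measure: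
   u is a.e. on D the pointwise limit of simple functions. *)
Definition bochner_measurable (R : realType) (H : normedModType R)
    (D : set R) (u : R -> H) : Prop :=
  exists (N : nat -> nat) (A : forall n, 'I_(N n) -> set (lebR R))
         (c : forall n, 'I_(N n) -> H),
    (forall n k, measurable (A n k)) /\
    \forall t \ae lebm, D t ->
      (fun n => \sum_(k < N n) (\1_(A n k) t : R) *: c n k) @ \oo --> u t.

(* x solves the Cauchy problem with velocity v = x' and acceleration a = x''. *)
Definition is_solution (R : realType) (H : completeNormedModType R)
    (ip : H -> H -> R) (m : nat) (g : 'I_m -> H -> H)
    (alpha t0 : R) (x0 v0 : H) (x v a : R -> H) : Prop :=
   (forall t, t0 < t -> is_derive t 1 x (v t)) /\
   (fun h : R => h^-1 *: (x (t0 + h) - x t0)) @ 0^'+ --> v t0 /\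
   {within `[t0, +oo[, continuous v} /\
   (forall T, t0 <= T -> abs_cont_on v t0 T) /\
   (* a Bochner measurable, Bochner integrable on each [t0, T], and
      v t = v t0 + Bochner-int_{t0}^{t} a  (tested against every h in H) *)
   [/\ bochner_measurable `[t0, +oo[ a,
       (forall T, t0 <= T ->
          lebm.-integrable (`[t0, T] : set (lebR R)) (fun s => (`|a s|)%:E)) &
       (forall h t, t0 <= t ->
          (\int[lebm]_(s in (`[t0, t] : set (lebR R))) (ip (a s) h)%:E)%E
          = (ip (v t) h - ip (v t0) h)%:E)] /\
   (\forall t \ae lebm, t0 < t -> is_derive (t : R) 1 v (a t)) /\
   (\forall t \ae lebm, t0 < t ->
      (alpha / t) *: v t + proj_set (translate (Cset g (x t)) (a t)) 0 = 0) /\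
   x t0 = x0 /\ v t0 = v0.

(* Main.v *)
Require Import Defs.
From HB Require Import structures.
From mathcomp Require Import all_boot all_order all_algebra.
From mathcomp Require Import all_classical all_reals all_analysis.
Import Order.TTheory GRing.Theory Num.Theory.
Import numFieldNormedType.Exports.
Local Open Scope classical_set_scope.
Local Open Scope ring_scope.
From mathcomp Require Import ring lra measurable_realfun.

Section Opt.
Variables (R : realType) (m : nat).
Implicit Types (G : 'I_m -> 'I_m -> R) (b u v w d : 'I_m -> R).

Definition bil G u v := \sum_i \sum_j u i * v j * G i j.
Definition lin b u := \sum_i u i * b i.
Definition Qf G b u := bil G u u + 2 * lin b u.
Definition sq u := \sum_i u i ^+ 2.
Definition axpy u c v : 'I_m -> R := fun i => u i + c * v i.
Definition dif u v : 'I_m -> R := fun i => u i - v i.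
Definition symm G := forall i j, G i j = G j i.
Definition psd G := forall d, 0 <= bil G d d.
Definition grad G b u : 'I_m -> R := fun j => 2 * (\sum_i u i * G i j) + 2 * b j.

Lemma bil_axpyl G u c v w : bil G (axpy u c v) w = bil G u w + c * bil G v w.
Proof.
rewrite /bil mulr_sumr -big_split; apply: eq_bigr => i _ /=.
rewrite mulr_sumr -big_split; apply: eq_bigr => j _ /=.
rewrite /axpy; ring.
Qed.

Lemma bil_axpyr G u c v w : bil G w (axpy u c v) = bil G w u + c * bil G w v.
Proof.
rewrite /bil mulr_sumr -big_split; apply: eq_bigr => i _ /=.
rewrite mulr_sumr -big_split; apply: eq_bigr => j _ /=.
rewrite /axpy; ring.
Qed.

Lemma bil_sym G u v : symm G -> bil G u v = bil G v u.
Proof.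
move=> sG; rewrite /bil exchange_big; apply: eq_bigr => i _; apply: eq_bigr => j _.
by rewrite sG; ring.
Qed.

Lemma lin_axpy b u c v : lin b (axpy u c v) = lin b u + c * lin b v.
Proof.
rewrite /lin mulr_sumr -big_split; apply: eq_bigr => i _ /=; rewrite /axpy; ring.
Qed.

Lemma grad_sum G b u d : \sum_j d j * grad G b u j = 2 * bil G u d + 2 * lin b d.
Proof.
rewrite /grad /bil /lin.
transitivity (\sum_j \sum_i 2 * (u i * d j * G i j) + \sum_j 2 * (d j * b j)).
  rewrite -big_split; apply: eq_bigr => j _ /=.
  rewrite mulrDr; congr (_ + _); last by ring.
  rewrite mulr_sumr mulr_sumr; apply: eq_bigr => i _; ring.
rewrite exchange_big /= !mulr_sumr; congr (_ + _).
by apply: eq_bigr => i _; rewrite mulr_sumr.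
Qed.

Lemma Qf_axpy G b u c d : symm G ->
  Qf G b (axpy u c d) = Qf G b u + c * (\sum_j d j * grad G b u j) + c ^+ 2 * bil G d d.
Proof.
move=> sG; rewrite grad_sum /Qf bil_axpyl !bil_axpyr lin_axpy (bil_sym _ d u sG).
ring.
Qed.

Definition sel (D : 'I_m -> R) : 'I_m -> R := fun l =>
  if [forall j, (D l <= D j) && ((j < l)%N ==> (D l < D j))] then 1 else 0.

Lemma sel_ex (D : 'I_m -> R) : (0 < m)%N ->
  exists l, (forall j, D l <= D j) /\ forall l', sel D l' = (l' == l)%:R.
Proof.
move=> m0; pose i0 := Ordinal m0.
pose S := [pred l : 'I_m | [forall j, D l <= D j]].
have [l1 _ l1min] := @arg_minP _ R _ i0 predT D isT.
have Sl1 : S l1 by apply/forallP => j; exact: l1min.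
have [l Sl lmin] := arg_minnP (fun i : 'I_m => val i) Sl1.
have Dl : forall j, D l <= D j by move=> j; exact: (forallP Sl j).
exists l; split => // l'.
rewrite /sel; case: ifPn => [/forallP H|/forallP H].
  have Sl' : S l' by apply/forallP => j; have /andP[] := H j.
  have := lmin _ Sl'; rewrite leq_eqVlt => /orP[/eqP/val_inj -> |ll']; first by rewrite eqxx.
  have /andP[_ /implyP/(_ ll')] := H l.
  by rewrite ltNge Dl.
case: (eqVneq l' l) => [El|]; last by move=> _.
subst l'; exfalso; apply: H => j; apply/andP; split => //.
apply/implyP => jl; rewrite lt_neqAle Dl andbT; apply/negP => /eqP Dj.
have Sj : S j by apply/forallP => k; rewrite -Dj.
by have := lmin _ Sj; rewrite leqNgt jl.

Qed.

Definition box u := forall i, 0 <= u i <= 1.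

Lemma simplex_box u : simplex u -> box u.
Proof.
move=> [u0 u1] i; rewrite u0 /=; rewrite -u1 (bigD1 i) //= lerDl.
by apply: sumr_ge0 => j _.
Qed.

Lemma sum_indic (l : 'I_m) (D : 'I_m -> R) : \sum_j (j == l)%:R * D j = D l.
Proof.
rewrite (bigD1 l) //= eqxx mul1r big1 ?addr0 // => j /negbTE ->; by rewrite mul0r.
Qed.

Lemma sel_simplex D : (0 < m)%N -> simplex (sel D).
Proof.
move=> m0; have [l [_ sl]] := sel_ex D m0; split.
  by move=> i; rewrite sl ler0n.
rewrite (eq_bigr (fun j => (j == l)%:R * 1)); last by move=> j _; rewrite sl mulr1.
by rewrite sum_indic.
Qed.

Lemma sel_min D w : (0 < m)%N -> simplex w ->
  \sum_j sel D j * D j <= \sum_j w j * D j.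
Proof.
move=> m0 [w0 w1]; have [l [Dl sl]] := sel_ex D m0.
under eq_bigr do rewrite sl; rewrite sum_indic.
apply: (@le_trans _ _ (\sum_j w j * D l)).
  by rewrite -mulr_suml w1 mul1r.
by apply: ler_sum => j _; apply: ler_wpM2l.
Qed.

Definition Cst G := \sum_i \sum_j `|G i j|.

Lemma bil_le_C G d : (forall i, `|d i| <= 1) -> bil G d d <= Cst G.
Proof.
move=> d1; rewrite /bil /Cst; apply: ler_sum => i _; apply: ler_sum => j _.
apply: (le_trans (ler_norm _)); rewrite !normrM.
rewrite -[X in _ <= X]mul1r ler_wpM2r //.
by rewrite -[1]mulr1; apply: ler_pM => //.
Qed.

Lemma Cst_ge0 G : 0 <= Cst G.
Proof. by apply: sumr_ge0 => i _; apply: sumr_ge0 => j _. Qed.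

Lemma axpy_dif1 u w : axpy u 1 (dif w u) = w.
Proof. by apply/funext => i; rewrite /axpy /dif; ring. Qed.

Lemma Qf_conv G b u w : symm G -> psd G ->
  \sum_j (w j - u j) * grad G b u j <= Qf G b w - Qf G b u.
Proof.
move=> sG pG; have := Qf_axpy G b u 1 (dif w u) sG; rewrite axpy_dif1 => ->.
rewrite /dif; have := pG (dif w u); rewrite /dif; lra.
Qed.

Lemma fw_step G b u w c : symm G -> psd G -> (0 < m)%N -> box u -> simplex w ->
  0 <= c <= 1 ->
  Qf G b (axpy u c (dif (sel (grad G b u)) u)) - Qf G b w <=
  (1 - c) * (Qf G b u - Qf G b w) + c ^+ 2 * Cst G.
Proof.
move=> sG pG m0 bu sw /andP[c0 c1].
rewrite Qf_axpy //.
set s := sel _.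
have h1 : \sum_j dif s u j * grad G b u j <= Qf G b w - Qf G b u.
  apply: le_trans (Qf_conv G b u w sG pG).
  rewrite /dif; under eq_bigr do rewrite mulrBl.
  under [X in _ <= X]eq_bigr do rewrite mulrBl.
  rewrite !sumrB lerD2r; exact: sel_min.
have h2 : bil G (dif s u) (dif s u) <= Cst G.
  apply: bil_le_C => i; rewrite /dif.
  have := simplex_box _ (sel_simplex (grad G b u) m0) i; have := bu i.
  rewrite /s => /andP[? ?] /andP[? ?]; rewrite ler_norml; apply/andP; split; lra.
have h3 : c * (\sum_j dif s u j * grad G b u j) <= c * (Qf G b w - Qf G b u).
  exact: ler_wpM2l.
have h4 : c ^+ 2 * bil G (dif s u) (dif s u) <= c ^+ 2 * Cst G.
  by apply: ler_wpM2l => //; rewrite sqr_ge0.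
lra.
Qed.

Fixpoint fw G b (k : nat) : 'I_m -> R :=
  match k with
  | 0 => fun _ => 0
  | k'.+1 => let u := fw G b k' in
      axpy u (2 / (k'.+2)%:R) (dif (sel (grad G b u)) u)
  end.

Lemma gam_01 k : (0 : R) <= 2 / (k.+2)%:R <= (1 : R).
Proof.
apply/andP; split; first by rewrite divr_ge0 // ler0n.
by rewrite ler_pdivrMr ?ltr0n // mul1r ler_nat.
Qed.

Lemma fw_box G b k : (0 < m)%N -> box (fw G b k).
Proof.
move=> m0; elim: k => [|k IH] i /=; first by rewrite lexx ler01.
have := gam_01 k; set c := 2 / _; move=> /andP[c0 c1].
have := simplex_box _ (sel_simplex (grad G b (fw G b k)) m0) i.
have := IH i; rewrite /axpy /dif => /andP[u0 u1] /andP[s0 s1].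
set u := fw G b k i; set s := sel _ i.
have e : u + c * (s - u) = (1 - c) * u + c * s by ring.
rewrite e; apply/andP; split.
  by apply: addr_ge0; apply: mulr_ge0 => //; lra.
have : (1 - c) * u <= (1 - c) by rewrite -[X in _ <= X]mulr1; apply: ler_wpM2l => //; lra.
have : c * s <= c by rewrite -[X in _ <= X]mulr1; apply: ler_wpM2l.
lra.
Qed.

Lemma fw_simplex G b k : (0 < m)%N -> simplex (fw G b k.+1).
Proof.
move=> m0; split; first by move=> i; have /andP[] := fw_box G b k.+1 m0 i.
elim: k => [|k IH].
  rewrite /= /axpy /dif big_split /= -mulr_sumr sumrB.
  have [_ ->] := sel_simplex (grad G b (fun _ => 0)) m0.
  by rewrite big1 // divff // add0r subr0 mulr1.
rewrite [fw G b k.+2]/= /axpy /dif big_split /= -mulr_sumr sumrB.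
have [_ ->] := sel_simplex (grad G b (fw G b k.+1)) m0.
by rewrite IH subrr mulr0 addr0.
Qed.

Lemma fw_bound G b w k : symm G -> psd G -> (0 < m)%N -> simplex w ->
  Qf G b (fw G b k.+1) - Qf G b w <= 4 * Cst G / (k.+3)%:R.
Proof.
move=> sG pG m0 sw; have C0 := Cst_ge0 G.
elim: k => [|k IH].
  have := fw_step G b (fw G b 0) w (2 / 2%:R) sG pG m0 (fw_box G b 0 m0) sw (gam_01 0).
  rewrite /= (_ : 2 / 2%:R = 1 :> R); last by rewrite divff.
  rewrite subrr mul0r add0r expr1n mul1r => h; apply: (le_trans h).
  by rewrite ler_pdivlMr ?ltr0n // mulrC ler_wpM2r // ler_nat.
have := fw_step G b (fw G b k.+1) w (2 / (k.+3)%:R) sG pG m0 (fw_box G b k.+1 m0) sw (gam_01 k.+1).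
move=> h; apply: (le_trans h) => {h}.
set n := (k.+3)%:R : R.
have n0 : 0 < n by rewrite ltr0n.
have -> : (k.+4)%:R = n + 1 by rewrite /n -natr1.
have : 1 - 2 / n >= 0.
  by have /andP[_ ] := gam_01 k.+1; rewrite -/n subr_ge0.
move=> g0.
apply: (le_trans (lerD (ler_wpM2l g0 IH) (lexx _))).
rewrite -/n.
have -> : (1 - 2 / n) * (4 * Cst G / n) + (2 / n) ^+ 2 * Cst G =
  4 * Cst G * (n - 1) / (n * n) by field; rewrite gt_eqF.
rewrite ler_pdivrMr ?mulr_gt0 // [X in _ <= X]mulrAC ler_pdivlMr ?(addr_gt0 n0) //.
have : 4 * Cst G * (n - 1) * (n + 1) <= 4 * Cst G * (n * n).
  rewrite -mulrA ler_wpM2l ?mulr_ge0 //; nra.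
lra.
Qed.

Lemma cvg_sumI (f : 'I_m -> nat -> R) (a : 'I_m -> R) :
  (forall i, f i n @[n --> \oo] --> a i) ->
  (\sum_i f i n) @[n --> \oo] --> \sum_i a i.
Proof. by move=> h; apply: cvg_big => //; exact: add_continuous. Qed.

Lemma cauchy_sq (u e : nat -> R) : e n @[n --> \oo] --> 0 ->
  (forall n k, (n <= k)%N -> (u n - u k) ^+ 2 <= e n) -> cvgn u.
Proof.
move=> e0 H; apply: cauchy_cvg; apply: cauchy_exP => eps eps0.
move/cvgrPdist_lt : e0 => /(_ (eps ^+ 2)); rewrite exprn_gt0 // => /(_ isT).
case=> N _ HN; exists (u N).
exists N => // n /= Nn; rewrite -ball_normE /=.
have := HN N (leqnn N); rewrite /= sub0r normrN => /(le_lt_trans (ler_norm _)) h.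
have h2 : `|u N - u n| ^+ 2 < eps ^+ 2.
  by rewrite real_normK ?num_real //; exact: le_lt_trans (H N n Nn) h.
by move: h2; rewrite ltr_pXn2r // ?nnegrE ?normr_ge0 ?ltW.
Qed.

Lemma coord_le_sq d i : (d i) ^+ 2 <= sq d.
Proof.
rewrite /sq (bigD1 i) //= lerDl; apply: sumr_ge0 => j _; exact: sqr_ge0.
Qed.

Lemma limit_pt (y : nat -> 'I_m -> R) (e : nat -> R) :
  (forall n, simplex (y n)) -> e n @[n --> \oo] --> 0 ->
  (forall n k, (n <= k)%N -> sq (dif (y n) (y k)) <= e n) ->
  simplex (fun i => limn (fun n => y n i)) /\
  forall i, (fun n => y n i) @ \oo --> limn (fun n => y n i).
Proof.
move=> sy e0 H.
have cv : forall i, (fun n => y n i) @ \oo --> limn (fun n => y n i).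
  move=> i; have : cvgn (fun n => y n i).
    apply: (cauchy_sq _ _ e0) => n k nk.
    exact: le_trans (coord_le_sq (dif (y n) (y k)) i) (H n k nk).
  by [].
split => //; split.
  move=> i; apply: limr_ge; first exact: (cvgP _ (cv i)).
  by apply: nearW => n; have [] := sy n.
have : (\sum_i y n i) @[n --> \oo] --> \sum_i limn (fun n => y n i).
  exact: cvg_sumI.
under eq_fun do rewrite (proj2 (sy _)).
move=> h; rewrite -(cvg_lim (@Rhausdorff R) h); apply: cvg_lim => //; exact: cvg_cst.
Qed.

Lemma Qf_cvg G b (y : nat -> 'I_m -> R) z :
  (forall i, (fun n => y n i) @ \oo --> z i) ->
  (fun n => Qf G b (y n)) @ \oo --> Qf G b z.
Proof.
move=> cv; rewrite /Qf /bil /lin; apply: cvgD.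
  apply: cvg_sumI => i; apply: cvg_sumI => j.
  by apply: cvgMr_tmp; apply: cvgM; [exact: cv|exact: cv].
apply: cvgMl_tmp; apply: cvg_sumI => i; exact: cvgMr_tmp.
Qed.

Lemma min_limit G b (y : nat -> 'I_m -> R) z (r : nat -> R) w :
  (forall i, (fun n => y n i) @ \oo --> z i) -> r n @[n --> \oo] --> 0 ->
  (forall n, Qf G b (y n) <= Qf G b w + r n) -> Qf G b z <= Qf G b w.
Proof.
move=> cv r0 H.
have h : (fun n => Qf G b (y n) - r n) @ \oo --> Qf G b z - 0.
  by apply: cvgB => //; exact: Qf_cvg.
rewrite subr0 in h; rewrite -(cvg_lim (@Rhausdorff R) h).
apply: limr_le; first exact: (cvgP _ h).
by apply: nearW => n; have := H n; lra.
Qed.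

Lemma K_harm (K : R) : 0 <= K -> (fun n => K / (n.+3)%:R) @ \oo --> 0.
Proof.
move=> K0; apply: (@squeeze_cvgr _ _ _ _ (fun _ => 0) (fun n => K * harmonic n)).
- apply: nearW => n; apply/andP; split; first by rewrite divr_ge0.
  rewrite /harmonic /=; apply: ler_wpM2l => //.
  rewrite lef_pV2 ?posrE ?ltr0n // ler_nat; exact: leq_trans (leqnSn _) (leqnSn _).
- exact: cvg_cst.
- by rewrite -(mulr0 K); apply: cvgMl_tmp; exact: cvg_harmonic.
Qed.

Lemma simplex_conv u v c : simplex u -> simplex v -> 0 <= c <= 1 ->
  simplex (axpy u c (dif v u)).
Proof.
move=> [u0 u1] [v0 v1] /andP[c0 c1]; split.
  move=> i; rewrite /axpy /dif.
  have -> : u i + c * (v i - u i) = (1 - c) * u i + c * v i by ring.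
  by apply: addr_ge0; apply: mulr_ge0 => //; lra.
by rewrite /axpy /dif big_split /= -mulr_sumr sumrB u1 v1 subrr mulr0 addr0.
Qed.

Lemma Qf_mid G b u v : symm G ->
  Qf G b (axpy u (1/2) (dif v u)) =
  (Qf G b u + Qf G b v) / 2 - bil G (dif v u) (dif v u) / 4.
Proof.
move=> sG; rewrite Qf_axpy //.
have := Qf_axpy G b u 1 (dif v u) sG; rewrite axpy_dif1 => ->.
by field.
Qed.

Lemma sq_difC u v : sq (dif u v) = sq (dif v u).
Proof. by apply: eq_bigr => i _; rewrite /dif; ring. Qed.

Definition zlim G b : 'I_m -> R := fun i => limn (fun k => fw G b k.+1 i).

Lemma zlim_spec G b (eps : R) : symm G -> (0 < m)%N -> 0 < eps ->
  (forall d, eps * sq d <= bil G d d) ->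
  [/\ simplex (zlim G b), (forall w, simplex w -> Qf G b (zlim G b) <= Qf G b w) &
      forall i, (fun k => fw G b k.+1 i) @ \oo --> zlim G b i].
Proof.
move=> sG m0 e0 sc.
have pG : psd G.
  move=> d; apply: le_trans (sc d); apply: mulr_ge0; first exact: ltW.
  by apply: sumr_ge0 => i _; exact: sqr_ge0.
have C0 := Cst_ge0 G.
pose y n := fw G b n.+1.
have sy : forall n, simplex (y n) by move=> n; exact: fw_simplex.
pose e n := (24 * Cst G / eps) / (n.+3)%:R.
have e0' : e n @[n --> \oo] --> 0.
  apply: K_harm; by rewrite divr_ge0 ?mulr_ge0 // ltW.
have H : forall n k, (n <= k)%N -> sq (dif (y n) (y k)) <= e n.
  move=> n k nk.
  set dl := 4 * Cst G / (n.+3)%:R.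
  have dlk : 4 * Cst G / (k.+3)%:R <= dl.
    apply: ler_wpM2l; first by rewrite mulr_ge0.
    by rewrite lef_pV2 ?posrE ?ltr0n // ler_nat !ltnS.
  set mid := axpy (y n) (1/2) (dif (y k) (y n)).
  have smid : simplex mid.
    apply: simplex_conv => //; apply/andP; split; first by rewrite divr_ge0.
    by rewrite ler_pdivrMr // mul1r ler1n.
  have h1 := fw_bound G b mid n sG pG m0 smid.
  have h2 := fw_bound G b (y n) k sG pG m0 (sy n).
  have h3 := Qf_mid G b (y n) (y k) sG.
  rewrite -/(y n) -/mid in h1; rewrite -/(y k) in h2; rewrite -/mid in h3.
  have hB : bil G (dif (y k) (y n)) (dif (y k) (y n)) <= 6 * dl.
    rewrite -/dl in h1; move: h1 h2 h3 dlk.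
    move: (Qf G b mid) (Qf G b (y n)) (Qf G b (y k)) (bil G _ _) (4 * Cst G / k.+3%:R) dl.
    move=> a1 a2 a3 a4 a5 a6; lra.
  have := sc (dif (y k) (y n)); rewrite -sq_difC => hs.
  have -> : e n = 6 * dl / eps.
    rewrite /e /dl; field; apply/andP; split; first by rewrite gt_eqF.
    by apply: lt0r_neq0; have := ler0n R n; lra.
  rewrite ler_pdivlMr // mulrC; lra.
have [sz cz] := limit_pt y e sy e0' H.
split => // w sw.
apply: (min_limit G b y (zlim G b) (fun n => 4 * Cst G / (n.+3)%:R) w cz).
  by apply: K_harm; rewrite mulr_ge0.
move=> n /=; have := fw_bound G b w n sG pG m0 sw; rewrite -/(y n).
move: (4 * Cst G / n.+3%:R) => c; lra.
Qed.

Definition Gt G (eps : R) : 'I_m -> 'I_m -> R :=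
  fun i j => G i j + (if i == j then eps else 0).

Lemma bil_Gt G eps u v : bil (Gt G eps) u v = bil G u v + eps * \sum_i u i * v i.
Proof.
rewrite /bil /Gt mulr_sumr -big_split; apply: eq_bigr => i _ /=.
under eq_bigr do rewrite mulrDr.
rewrite big_split /=; congr (_ + _).
rewrite (bigD1 i) //= eqxx big1 ?addr0; first by ring.
by move=> j /negbTE; rewrite eq_sym => ->; rewrite mulr0.
Qed.

Lemma Qf_Gt G b eps u : Qf (Gt G eps) b u = Qf G b u + eps * sq u.
Proof.
rewrite /Qf bil_Gt /sq; under [X in _ = _ + _ * X]eq_bigr do rewrite expr2.
ring.
Qed.

Lemma symm_Gt G eps : symm G -> symm (Gt G eps).
Proof. by move=> sG i j; rewrite /Gt sG eq_sym. Qed.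

Lemma sc_Gt G eps d : psd G -> eps * sq d <= bil (Gt G eps) d d.
Proof.
move=> pG; rewrite bil_Gt /sq; under [X in _ <= _ + _ * X]eq_bigr do rewrite -expr2.
by rewrite lerDr; exact: pG.
Qed.

Lemma sq_ge0 u : 0 <= sq u.
Proof. by apply: sumr_ge0 => i _; exact: sqr_ge0. Qed.

Lemma sq_le1 u : simplex u -> sq u <= 1.
Proof.
move=> su; have [_ <-] := su; apply: ler_sum => i _.
have /andP[u0 u1] := simplex_box u su i.
by rewrite expr2 -[X in _ <= X]mulr1 ler_wpM2l.
Qed.

Definition thsel G b : 'I_m -> R :=
  fun i => limn (fun n => zlim (Gt G (harmonic n)) b i).

Lemma thsel_spec G b : symm G -> psd G -> (0 < m)%N ->
  [/\ simplex (thsel G b), (forall w, simplex w -> Qf G b (thsel G b) <= Qf G b w) &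
    forall i, (fun n => zlim (Gt G (harmonic n)) b i) @ \oo --> thsel G b i].
Proof.
move=> sG pG m0.
pose ep n : R := harmonic n.
have ep0 n : 0 < ep n by exact: harmonic_gt0.
pose z n := zlim (Gt G (ep n)) b.
have zs : forall n, simplex (z n) /\
    forall w, simplex w -> Qf G b (z n) + ep n * sq (z n) <= Qf G b w + ep n * sq w.
  move=> n; have [h1 h2 _] := zlim_spec (Gt G (ep n)) b (ep n) (symm_Gt G _ sG) m0 (ep0 n)
     (fun d => sc_Gt G (ep n) d pG).
  by split => // w sw; rewrite -!Qf_Gt; exact: h2.
have epdec n k : (n <= k)%N -> ep k <= ep n.
  by move=> nk; rewrite /ep /harmonic /= lef_pV2 ?posrE ?ltr0n // ler_nat.
pose N n := sq (z n).
have Nmono : forall n k, (n <= k)%N -> N n <= N k.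
  move=> n k; rewrite leq_eqVlt => /orP[/eqP -> //|nk].
  have h1 := (zs n).2 (z k) (zs k).1.
  have h2 := (zs k).2 (z n) (zs n).1.
  have ek : ep k < ep n.
    by rewrite /ep /harmonic /= ltf_pV2 ?posrE ?ltr0n // ltr_nat ltnS.
  rewrite -/(N n) -/(N k) in h1 h2.
  have : (ep n - ep k) * (N n - N k) <= 0.
    move: h1 h2; move: (Qf G b (z n)) (Qf G b (z k)) => a1 a2; nra.
  rewrite pmulr_rle0 ?subr_gt0 // subr_le0 //.
have Nb : forall n, N n <= 1 by move=> n; exact: sq_le1 (zs n).1.
have cN : cvgn N.
  apply: cvgP; apply: nondecreasing_cvgn; first by move=> n k; exact: Nmono.
  by exists 1 => _ [n _ <-]; exact: Nb.
have NL : forall n, N n <= limn N.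
  by move=> n; apply: nondecreasing_cvgn_le => // a c; exact: Nmono.
pose e n := 2 * (limn N - N n).
have e0 : e n @[n --> \oo] --> 0.
  have : e n @[n --> \oo] --> 2 * (limn N - limn N).
    by apply: cvgMl_tmp; apply: cvgB => //; exact: cvg_cst.
  by rewrite subrr mulr0.
have H : forall n k, (n <= k)%N -> sq (dif (z n) (z k)) <= e n.
  move=> n k nk.
  set mid := axpy (z n) (1/2) (dif (z k) (z n)).
  have smid : simplex mid.
    apply: simplex_conv; [exact: (zs n).1|exact: (zs k).1|].
    apply/andP; split; first by rewrite divr_ge0.
    by rewrite ler_pdivrMr // mul1r ler1n.
  have h1 := (zs n).2 mid smid.
  have h2 := (zs k).2 (z n) (zs n).1.
  have h3 := Qf_mid (Gt G (ep n)) b (z n) (z k) (symm_Gt G _ sG).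
  rewrite -/mid !Qf_Gt in h3.
  have h4 := sc_Gt G (ep n) (dif (z k) (z n)) pG.
  have h5 : ep k * (N n - N k) <= 0.
    by apply: mulr_ge0_le0; [exact: ltW|rewrite subr_le0; exact: Nmono].
  rewrite -/(N n) -/(N k) in h1 h2 h3.
  have h6 : ep n * sq (dif (z k) (z n)) <= ep n * (2 * (N k - N n)).
    move: h1 h2 h3 h4 h5.
    move: (Qf G b mid) (Qf G b (z n)) (Qf G b (z k)) (bil _ _ _) (ep n * sq mid).
    move: (ep n * sq (dif (z k) (z n))) (ep n) (ep k) (N n) (N k).
    move=> a1 a2 a3 a4 a5 a6 a7 a8 a9 a10.
    lra.
  rewrite ler_pM2l // in h6; rewrite sq_difC /e; have := NL k; lra.
have [sz cz] := limit_pt z e (fun n => (zs n).1) e0 H.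
split => // w sw.
apply: (min_limit G b z (thsel G b) ep w cz); first exact: cvg_harmonic.
move=> n; have h := (zs n).2 w sw.
have h1 : ep n * sq w <= ep n.
  by rewrite -[X in _ <= X]mulr1 ler_pM2l //; exact: sq_le1.
have h2 : 0 <= ep n * sq (z n) by apply: mulr_ge0; [exact: ltW|exact: sq_ge0].
lra.
Qed.

Section Meas.
Context (d : measure_display) (T : measurableType d) (E : set T) (mE : measurable E).

Definition mfun (f : T -> R) := measurable_fun E f.

Lemma mfun_all (I : eqType) (s : seq I) (c : I -> T -> bool) :
  (forall j, measurable_fun E (c j)) -> measurable_fun E (fun t => all (c ^~ t) s).
Proof.
move=> mc; elim: s => [|j s IH] /=; first exact: measurable_cst.
exact: measurable_and.
Qed.

Lemma mfun_sel (D : T -> 'I_m -> R) l : (forall j, mfun (D ^~ j)) ->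
  mfun (fun t => sel (D t) l).
Proof.
move=> mD; rewrite /sel /mfun.
apply: measurable_fun_if; [exact: mE| |exact: measurable_cst|exact: measurable_cst].
apply: (eq_measurable_fun (fun t => all (fun j =>
   (D t l <= D t j) && ((j < l)%N ==> (D t l < D t j))) (enum 'I_m))).
  move=> t _; apply/idP/idP.
    by move/allP => h; apply/forallP => j; apply: h; rewrite mem_enum.
  by move/forallP => h; apply/allP => j _; exact: h.
apply: (mfun_all _ (enum 'I_m) (fun j t => (D t l <= D t j) && ((j < l)%N ==> (D t l < D t j)))).
move=> j; apply: measurable_and; first exact: (measurable_fun_ler (mD l) (mD j)).
case: (j < l)%N => /=; first exact: (measurable_fun_ltr (mD l) (mD j)).
exact: measurable_cst.
Qed.

Variables (G : T -> 'I_m -> 'I_m -> R) (b : T -> 'I_m -> R).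
Hypotheses (mG : forall i j, mfun (fun t => G t i j)) (mb : forall i, mfun (fun t => b t i)).

Lemma mfun_Gt (ep : R) i j : mfun (fun t => Gt (G t) ep i j).
Proof. by apply: measurable_funD; [exact: mG|exact: measurable_cst]. Qed.

Lemma mfun_fw (ep : R) k i : mfun (fun t => fw (Gt (G t) ep) (b t) k i).
Proof.
elim: k i => [|k IH] i /=; first exact: measurable_cst.
rewrite /axpy /dif; apply: measurable_funD; first exact: IH.
apply: measurable_funM; first exact: measurable_cst.
apply: measurable_funB; last exact: IH.
apply: mfun_sel => j; rewrite /grad.
apply: measurable_funD; apply: measurable_funM; try exact: measurable_cst.
  apply: measurable_sum => l; apply: measurable_funM; [exact: IH|exact: mfun_Gt].
exact: mb.
Qed.

Hypotheses (sG : forall t, E t -> symm (G t)) (pG : forall t, E t -> psd (G t))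
  (m0 : (0 < m)%N).

Lemma mfun_zlim ep i : 0 < ep -> mfun (fun t => zlim (Gt (G t) ep) (b t) i).
Proof.
move=> ep0; apply: (@measurable_fun_cvg _ _ _ E (fun k t => fw (Gt (G t) ep) (b t) k.+1 i)).
  move=> k; exact: mfun_fw.
move=> t Et.
have [_ _ h] := zlim_spec (Gt (G t) ep) (b t) ep (symm_Gt _ _ (sG t Et)) m0 ep0
   (fun d => sc_Gt (G t) ep d (pG t Et)).
exact: h.
Qed.

Lemma mfun_thsel i : mfun (fun t => thsel (G t) (b t) i).
Proof.
apply: (@measurable_fun_cvg _ _ _ E (fun n t => zlim (Gt (G t) (harmonic n)) (b t) i)).
  move=> n; apply: mfun_zlim; exact: harmonic_gt0.
move=> t Et; have [_ _ h] := thsel_spec (G t) (b t) (sG t Et) (pG t Et) m0.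
exact: h.
Qed.

End Meas.

End Opt.

Arguments bil {R m}. Arguments lin {R m}. Arguments Qf {R m}. Arguments sq {R m}.
Arguments axpy {R m}. Arguments dif {R m}. Arguments symm {R m}. Arguments psd {R m}.
Arguments thsel {R m}. Arguments thsel_spec {R m}. Arguments Qf_mid {R m}.
Arguments simplex_conv {R m}. Arguments mfun_thsel {R m d T E}.

Section Hil.
Variables (R : realType) (H : normedModType R) (ip : H -> H -> R).
Hypothesis hip : is_inner_product ip.

Lemma ip_sym x y : ip x y = ip y x.
Proof. by case: hip. Qed.
Lemma ip_lin a x y z : ip (a *: x + y) z = a * ip x z + ip y z.
Proof. by case: hip. Qed.
Lemma ip_norm x : ip x x = `|x| ^+ 2.
Proof. by case: hip. Qed.

Lemma ip_addl x y z : ip (x + y) z = ip x z + ip y z.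
Proof. by rewrite -[x in LHS]scale1r ip_lin mul1r. Qed.
Lemma ip0l z : ip 0 z = 0.
Proof.
have := ip_addl 0 0 z; rewrite addr0 => h.
by apply/eqP; rewrite -(subrr (ip 0 z)) {2}h addrK eqxx.
Qed.
Lemma ip_scalel a x z : ip (a *: x) z = a * ip x z.
Proof. by rewrite -[a *: x]addr0 ip_lin ip0l addr0. Qed.
Lemma ip_addr x y z : ip z (x + y) = ip z x + ip z y.
Proof. by rewrite ip_sym ip_addl ![ip _ z]ip_sym. Qed.
Lemma ip_scaler a x z : ip z (a *: x) = a * ip z x.
Proof. by rewrite ip_sym ip_scalel ip_sym. Qed.
Lemma ip_oppl x z : ip (- x) z = - ip x z.
Proof. by rewrite -scaleN1r ip_scalel mulN1r. Qed.
Lemma ip_oppr x z : ip z (- x) = - ip z x.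
Proof. by rewrite ip_sym ip_oppl ip_sym. Qed.

Lemma ip_suml m (u : 'I_m -> R) (p : 'I_m -> H) z :
  ip (\sum_i u i *: p i) z = \sum_i u i * ip (p i) z.
Proof.
elim/big_rec2: _ => [|i y1 y2 _ <-]; first exact: ip0l.
by rewrite ip_addl ip_scalel.
Qed.

Lemma ip_sumr m (u : 'I_m -> R) (p : 'I_m -> H) z :
  ip z (\sum_i u i *: p i) = \sum_i u i * ip z (p i).
Proof. by rewrite ip_sym ip_suml; apply: eq_bigr => i _; rewrite ip_sym. Qed.

Lemma ip_polar x y : ip x y = (`|x + y| ^+ 2 - `|x - y| ^+ 2) / 4.
Proof.
rewrite -!ip_norm !ip_addl !ip_addr !ip_oppl !ip_oppr (ip_sym y x); by field.
Qed.

Lemma cvg_ip T (F : set_system T) (FF : Filter F) (f g : T -> H) u w :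
  f t @[t --> F] --> u -> g t @[t --> F] --> w ->
  ip (f t) (g t) @[t --> F] --> ip u w.
Proof.
move=> fu gw; rewrite ip_polar.
under eq_fun do rewrite ip_polar.
apply: cvgMr_tmp; apply: cvgB; rewrite ?expr2; apply: cvgM; apply: cvg_norm;
  by [apply: cvgD|apply: cvgB].
Qed.

Variable (m : nat).
Definition gram (p : 'I_m -> H) : 'I_m -> 'I_m -> R := fun i j => ip (p i) (p j).
Definition lint (p : 'I_m -> H) (a : H) : 'I_m -> R := fun i => ip (p i) a.

Lemma gram_symm p : symm (gram p).
Proof. by move=> i j; rewrite /gram ip_sym. Qed.

Lemma bil_gram p u v : bil (gram p) u v = ip (\sum_i u i *: p i) (\sum_i v i *: p i).
Proof.
rewrite ip_suml; apply: eq_bigr => i _; rewrite ip_sumr mulr_sumr.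
by apply: eq_bigr => j _; rewrite /gram mulrA.
Qed.

Lemma gram_psd p : psd (gram p).
Proof. by move=> d; rewrite bil_gram ip_norm sqr_ge0. Qed.

Lemma Qf_gram p a u : `|\sum_i u i *: p i + a| ^+ 2 = Qf (gram p) (lint p a) u + `|a| ^+ 2.
Proof.
rewrite -!ip_norm ip_addl !ip_addr /Qf bil_gram /lin ip_suml /lint.
rewrite (ip_sym a) ip_suml.
move: (\sum_i _) (\sum_i _) (ip a a) => X Y Z; lra.
Qed.

Lemma proj_eq (p : 'I_m -> H) (a : H) (th : 'I_m -> R) : simplex th ->
  (forall w, simplex w -> Qf (gram p) (lint p a) th <= Qf (gram p) (lint p a) w) ->
  proj_set (translate (conv_hull p) a) 0 = \sum_i th i *: p i + a.
Proof.
move=> sth thmin.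
set K := translate (conv_hull p) a.
set u := \sum_i th i *: p i + a.
have Kw : forall w, K w -> exists2 v, simplex v & w = \sum_i v i *: p i + a.
  by move=> w [k [v sv <-] <-]; exists v.
have Ku : K u by exists (\sum_i th i *: p i) => //; exists th.
have umin : forall w, K w -> `|u - 0| ^+ 2 <= `|w - 0| ^+ 2.
  move=> w /Kw [v sv ->]; rewrite !subr0 !Qf_gram lerD2r; exact: thmin.
have hS : exists q0, [set q | K q /\ forall w, K w -> `|q - 0| ^+ 2 <= `|w - 0| ^+ 2] q0.
  by exists u.
have := getPex hS; rewrite /proj_set; set q := get _.
move=> [Kq qmin]; have [v sv qE] := Kw q Kq.
have e1 := qmin u Ku; have e2 := umin q Kq.
rewrite qE /u !subr0 !Qf_gram in e1 e2.
have eQ : Qf (gram p) (lint p a) v = Qf (gram p) (lint p a) th by lra.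
set mid := axpy th (1/2) (dif v th).
have smid : simplex mid.
  apply: simplex_conv => //; apply/andP; split; first by rewrite divr_ge0.
  by rewrite ler_pdivrMr // mul1r ler1n.
have h := thmin mid smid.
rewrite /mid (Qf_mid _ _ _ _ (gram_symm p)) eQ in h.
have hB : bil (gram p) (dif v th) (dif v th) <= 0.
  move: h; move: (Qf _ _ th) (bil _ _ _) => X Y; lra.
have hB0 : bil (gram p) (dif v th) (dif v th) = 0.
  by apply/eqP; rewrite eq_le hB gram_psd.
rewrite bil_gram ip_norm in hB0.
move/eqP: hB0; rewrite sqrf_eq0 normr_eq0 => /eqP hD.
rewrite qE /u; congr (_ + _); apply/eqP; rewrite -subr_eq0 -sumrB.
apply/eqP; rewrite -[RHS]hD; apply: eq_bigr => i _.
by rewrite /dif scalerBl.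
Qed.

End Hil.

Arguments gram {R H} ip {m}. Arguments lint {R H} ip {m}.
Arguments gram_symm {R H ip} hip {m}. Arguments gram_psd {R H ip} hip {m}.
Arguments proj_eq {R H ip} hip {m}. Arguments cvg_ip {R H ip} hip {T F FF f g u w}.
Arguments ip_sumr {R H ip} hip {m}.

Section Leb.
Variable R : realType.

Lemma bor (A : set R) : @measurable _ (measurableTypeR R) A -> @measurable _ (lebR R) A.
Proof. exact: sub_caratheodory. Qed.

Lemma mtrans (A : set R) (f : R -> R) : @measurable _ (measurableTypeR R) A ->
  @measurable_fun _ _ (measurableTypeR R) R A f ->
  @measurable_fun _ _ (lebR R) R A f.
Proof. by move=> mA mf _ Y mY; apply: bor; exact: mf. Qed.

Lemma mfun_set1 (t0 : R) (f : lebR R -> R) :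
  @measurable_fun _ _ (lebR R) R [set t0] f.
Proof.
move=> _ Y mY; have [h|h] := pselect (Y (f t0)).
  rewrite (_ : _ `&` _ = [set t0]); first by apply: bor; exact: measurable_set1.
  by apply/seteqP; split => [t [] //|t /= ->]; split.
rewrite (_ : _ `&` _ = set0) //; apply/seteqP; split => [t [/= -> //]|//].
Qed.

Lemma mfun_negl (N0 S0 : set (lebR R)) (f : lebR R -> R) :
  measurable S0 -> lebm S0 = 0%E -> N0 `<=` S0 -> measurable_fun N0 f.
Proof.
move=> mS0 S00 NS _ Y mY; apply: negligible_sub_caratheodory.
by exists S0; split => // t [/NS].
Qed.

End Leb.

Theorem lemma4p3 (R : realType) (H : completeNormedModType R)
  (ip : H -> H -> R) (m : nat) (f : 'I_m -> H -> R) (g : 'I_m -> H -> H)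
  (alpha t0 : R) (x0 v0 : H) (x v a : R -> H) :
  is_inner_product ip ->
  (0 < m)%N ->
  (forall i, convex_fun (f i)) ->
  (forall i, is_gradient ip (f i) (g i)) ->
  (forall i, continuous (g i)) ->
  0 < alpha -> 0 < t0 ->
  is_solution ip g alpha t0 x0 v0 x v a ->
  exists theta : R -> 'I_m -> R,
    (forall i, measurable_fun (`[t0, +oo[ : set (lebR R))
                              (fun t : lebR R => theta t i)) /\
    (forall t, t0 <= t ->
       @simplex R m (theta t) /\
       proj_set (translate (Cset g (x t)) (a t)) 0
         = \sum_(i < m) theta t i *: g i (x t) + a t).
Proof.
move=> hip m0 _ _ gc _ _ [dx [_ [_ [_ [[bm _ _] _]]]]].
pose P t i := g i (x t).
pose Gr t := gram ip (P t).
pose br t := lint ip (P t) (a t).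
exists (fun t i => thsel (Gr t) (br t) i); split; last first.
  move=> t _.
  have [sth thmin _] := thsel_spec (Gr t) (br t) (gram_symm hip _) (gram_psd hip _) m0.
  split => //; exact: (proj_eq hip (P t) (a t)).
move=> i.
case: bm => Nn [A [c [mA hae]]].
case: hae => S0 [mS0 S00 subS0].
pose O : set (lebR R) := `]t0, +oo[%classic.
have mO : measurable O by apply: bor; exact: measurable_itv.
pose E := O `\` S0.
have mE : measurable E := measurableD mO mS0.
have xc : forall t, t0 < t -> {for t, continuous x}.
  move=> t tt; apply: differentiable_continuous; apply/derivable1_diffP.
  by have [] := dx t tt.
have Pc : forall t j, t0 < t -> {for t, continuous (fun s => P s j)}.
  move=> t j tt; exact: continuous_comp (xc t tt) (gc j (x t)).
have cmeas : forall F : R -> R, (forall t, t0 < t -> {for t, continuous F}) ->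
    @measurable_fun _ _ (lebR R) R E F.
  move=> F Fc; apply: (measurable_funS mO); first exact: subDsetl.
  apply: mtrans; first exact: measurable_itv.
  apply: open_continuous_measurable_fun; first exact: rray_open.
  by move=> t; rewrite inE /O /= in_itv /= andbT => tt; exact: Fc.
have mG : forall j k, @measurable_fun _ _ (lebR R) R E (fun t => Gr t j k).
  move=> j k; apply: cmeas => t tt; apply: (cvg_ip hip); exact: Pc.
have mb : forall j, @measurable_fun _ _ (lebR R) R E (fun t => br t j).
  move=> j.
  apply: (@measurable_fun_cvg _ (lebR R) R E
    (fun n t => \sum_(k < Nn n) (\1_(A n k) t : R) * ip (P t j) (c n k))).
    move=> n; apply: measurable_sum => k; apply: measurable_funM.
      exact: measurable_indic.
    apply: cmeas => t tt; apply: (cvg_ip hip); [exact: Pc|exact: cvg_cst].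
  move=> t [Ot nS0].
  have tt : t0 < t by move: Ot; rewrite /O /= in_itv /= andbT.
  have Dt : `[t0, +oo[%classic t by rewrite /= in_itv /= andbT ltW.
  have [hP|hP] := pselect (`[t0, +oo[%classic t ->
      \sum_(k < Nn n) \1_(A n k) t *: c n k @[n --> \oo] --> a t); last first.
    by exfalso; apply: nS0; apply: subS0.
  have -> : (fun n => \sum_(k < Nn n) (\1_(A n k) t : R) * ip (P t j) (c n k)) =
      (fun n => ip (P t j) (\sum_(k < Nn n) (\1_(A n k) t : R) *: c n k)).
    by apply/funext => n; rewrite (ip_sumr hip).
  exact: (cvg_ip hip (cvg_cst _) (hP Dt)).
have m1 : measurable ([set t0] : set (lebR R)) by apply: bor; exact: measurable_set1.
have mOS : measurable (O `&` S0) by exact: measurableI.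
have DE : (`[t0, +oo[%classic : set (lebR R)) = [set t0] `|` ((O `&` S0) `|` E).
  apply/seteqP; split => t /=.
    rewrite in_itv /= andbT le_eqVlt => /orP[/eqP <-|tt]; first by left.
    right; have Ot : O t by rewrite /O /= in_itv /= andbT.
    by have [h|h] := pselect (S0 t); [left|right].
  case=> [->|[[Ot _]|[Ot _]]]; rewrite in_itv /= andbT //.
    by move: Ot; rewrite /O /= in_itv /= andbT => /ltW.
  by move: Ot; rewrite /O /= in_itv /= andbT => /ltW.
rewrite DE; apply/(measurable_funU _ m1 (measurableU _ _ mOS mE)); split.
  exact: mfun_set1.
apply/(measurable_funU _ mOS mE); split.
  by apply: (mfun_negl _ _ _ _ mS0 S00); exact: subIsetr.
apply: (mfun_thsel mE Gr br mG mb _ _ m0 i).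
  by move=> t _; exact: gram_symm.
by move=> t _; exact: gram_psd.
Qed.
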